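(* Let $q$ be a prime power, let $n\ge 5$, let $a$ be the smallest prime divisor of $n$, let $d$ be an integer with $2\le d<n-(n/a)$, and let $\ell$ be a common prime divisor of $n$ and $d$. Then $$\binom{n/\ell}{d/\ell}_q\cdot\frac{|\mathrm{GL}(d/\ell,q^\ell)|}{|\mathrm{GL}(d,q)|}\cdot\frac{|\mathrm{GL}(n/\ell-d/\ell,q^\ell)|}{|\mathrm{GL}(n-d,q)|}\le q^{-(\ell-1)^2-3}.$$
   Context: $\binom{N}{K}_q=\prod_{i=0}^{K-1}\frac{q^{N-i}-1}{q^{K-i}-1}$ is the $q$-binomial coefficient, and $\mathrm{GL}(k,r)$ is the general linear group of $k\times k$ invertible matrices over $\mathbb{F}_r$. *)

(* Defs.v *)
From mathcomp Require Import all_boot all_order all_algebra.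
Set Implicit Arguments. Unset Strict Implicit. Unset Printing Implicit Defensive.
Import Order.TTheory GRing.Theory Num.Theory.
Local Open Scope ring_scope.

Definition qbinom (q N K : nat) : rat :=
  \prod_(i < K) (((q ^ (N - i))%N%:R - 1) / ((q ^ (K - i))%N%:R - 1)).

Definition GLorder (k r : nat) : nat := (\prod_(i < k) (r ^ k - r ^ i))%N.

(* Main.v *)
Require Import Defs.
From mathcomp Require Import all_boot all_order all_algebra.
From mathcomp Require Import zify ring lra.
Import Order.TTheory GRing.Theory Num.Theory.
Local Open Scope ring_scope.
Lemma core3 (l k j : nat) : (3 <= l)%N -> (1 <= k)%N -> (1 <= j)%N ->
  (5 <= k* k + j* j)%N ->
  (k * (j + 1) + l * (k * k) + l * (j * j) + (l * l + 4) + l* k + l* j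
    <= l* k* (l* k) + l* j* (l* j) + 2 * l)%N.
Proof.
move=> hl hk hj hS.
have h1 : (k <= k* k)%N by nia.
have h2 : (j <= j* j)%N by nia.
have h2' : (l* k <= l* (k* k))%N by nia.
have h2'' : (l* j <= l* (j* j))%N by nia.
have h3 : (2* k* j <= k* k+j* j)%N.
  case: (leqP k j) => hkj.
    rewrite -(subnK hkj); set t := (j - k)%N; nia.
  have hjk := ltnW hkj. rewrite -(subnK hjk); set t := (k - j)%N; nia.
have h5 : (2* l+3 <= l* l)%N by nia.
have h6 : (l* l* (k* k+j* j) + 5* (2* l+3) >= 5* (l* l) + (2* l+3)* (k* k+j* j))%N.
  move: h5 hS; set S := (k* k+j* j)%N; set A := (l* l)%N; set B := (2* l+3)%N => h5 hS.
  nia.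
have h4 : (3* l <= l* l)%N by nia.
lia.
Qed.
Lemma core2 (k j : nat) : (1 <= k)%N -> (k < j)%N -> ~ (k = 1%N /\ j = 2%N) ->
  (k * (j + 1) + 2 * (k * k) + 2 * (j * j) + (2 * 2 + 4) + 2 * k + 2 * j
    <= 2 * k * (2 * k) + 2 * j * (2 * j) + 2 * 2)%N.
Proof.
move=> hk hkj h.
have [Ek|k2] : k = 1%N \/ (2 <= k)%N by lia.
  subst k. have j3 : (3 <= j)%N by lia. nia.
have h1 : (j * k + j <= j * j)%N by nia.
nia.
Qed.

Lemma expo (l k j : nat) : (2 <= l)%N -> (1 <= k)%N -> (1 <= j)%N ->
  ~ (k = 1%N /\ j = 1%N) -> (l = 2%N -> k < j)%N -> ~ (l = 2%N /\ k = 1%N /\ j = 2%N) ->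
  (k * (j + 1) + l * (k * k) + l * (j * j) + ((l - 1) ^ 2 + 3)
    <= (l * k) * (l * k - 1) + (l * j) * (l * j - 1))%N.
Proof.
move=> hl hk hj h1 h2 h3.
have H : (k * (j + 1) + l * (k * k) + l * (j * j) + (l * l + 4) + l * k + l * j
    <= l * k * (l * k) + l * j * (l * j) + 2 * l)%N.
  have [El|l3] : l = 2%N \/ (3 <= l)%N by lia.
    subst l. apply: core2 => //; [exact: h2 | by move=> [a b]; apply: h3].
  apply: core3 => //.
  have [Ek|k2] : k = 1%N \/ (2 <= k)%N by lia.
    subst k. have : (2 <= j)%N by lia. nia.
  nia.
have e1 : (l * k * (l * k - 1) + l * k = l * k * (l * k))%N.
  by rewrite mulnBr muln1 subnK // leq_pmulr // muln_gt0; apply/andP; split; lia.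
have e2 : (l * j * (l * j - 1) + l * j = l * j * (l * j))%N.
  by rewrite mulnBr muln1 subnK // leq_pmulr // muln_gt0; apply/andP; split; lia.
have e3 : ((l - 1) ^ 2 + 2 * l = l * l + 1)%N.
  case: l hl {H e1 e2 h2 h3} => // l _; rewrite subSS subn0; ring.
move: H e1 e2 e3.
set A := (l * k * (l * k - 1))%N; set B := (l * j * (l * j - 1))%N; set C := ((l - 1) ^ 2)%N.
lia.
Qed.
Lemma GL_ub k r : (GLorder k r <= r ^ (k * k))%N.
Proof.
rewrite /GLorder; apply: (@leq_trans (\prod_(i < k) r ^ k)%N).
  by apply: leq_prod => i _; apply: leq_subr.
by rewrite prod_nat_const card_ord -expnM.
Qed.

Lemma GL_lb N q : (2 <= q)%N -> (q ^ (N * (N - 1)) <= GLorder N q)%N.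
Proof.
move=> hq; rewrite /GLorder; apply: (@leq_trans (\prod_(i < N) q ^ (N - 1))%N).
  by rewrite prod_nat_const card_ord -expnM mulnC.
apply: leq_prod => i _.
have hi := ltn_ord i.
have e : (q ^ N = q * q ^ (N - 1))%N by rewrite -expnS; have -> : (N - 1).+1 = N by lia.
have h1 : (q ^ i <= q ^ (N - 1))%N by apply: leq_pexp2l; lia.
rewrite e; move: h1; set X := (q ^ (N - 1))%N; set Y := (q ^ i)%N => h1.
nia.
Qed.

Lemma qbinom_bd q m k : (2 <= q)%N -> (k <= m)%N ->
  0 <= qbinom q m k <= (q ^ (k * (m - k + 1)))%:R.
Proof.
move=> hq hkm; rewrite /qbinom.
have hF : forall i : 'I_k, 0 <= (((q ^ (m - i))%N%:R - 1) / ((q ^ (k - i))%N%:R - 1) : rat)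
   <= (q ^ (m - k + 1))%N%:R.
  move=> i; have hi := ltn_ord i.
  have e : (q ^ (m - i) = q ^ (m - k) * q ^ (k - i))%N by rewrite -expnD; have -> : (m - k + (k - i) = m - i)%N by lia.
  have hx : (2 <= q ^ (k - i))%N.
    apply: (leq_trans hq); rewrite -{1}(expn1 q); apply: leq_pexp2l; lia.
  have hy : (1 <= q ^ (m - k))%N by rewrite expn_gt0; lia.
  rewrite e expnD expn1.
  move: hx hy; set x := (q ^ (k - i))%N; set y := (q ^ (m - k))%N => hx hy.
  have hX : (2 : rat) <= x%:R by rewrite (ler_nat rat 2 x).
  have hY : (1 : rat) <= y%:R by rewrite (ler_nat rat 1 y).
  have hQ : (2 : rat) <= q%:R by rewrite (ler_nat rat 2 q).
  have hpos : (0 : rat) < x%:R - 1 by lra.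
  rewrite !natrM; apply/andP; split.
    apply: divr_ge0; last lra. nra.
  rewrite ler_pdivrMr //.
  have h3 : 0 <= y%:R * (q%:R - 2) * (x%:R - 1) :> rat.
    apply: mulr_ge0; last lra. apply: mulr_ge0; lra.
  nra.
have -> : (q ^ (k * (m - k + 1)))%N%:R = \prod_(i < k) ((q ^ (m - k + 1))%N%:R : rat).
  by rewrite prodr_const card_ord -natrX -expnM mulnC.
apply/andP; split.
  by apply: prodr_ge0 => i _; case/andP: (hF i).
by apply: ler_prod => i _; exact: hF i.
Qed.
Lemma frac_le (a a' b b' : rat) : 0 <= a -> a <= a' -> 0 < b' -> b' <= b -> a / b <= a' / b'.
Proof.
move=> ha haa hb' hbb.
have hb : 0 < b by apply: lt_le_trans hbb.
apply: ler_pM => //; first by rewrite invr_ge0 ltW.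
by rewrite lef_pV2 ?posrE.
Qed.

Lemma final_ineq (r : rat) (a b c d f e : nat) : 2 <= r ->
  (a + b + d + e <= c + f)%N ->
  r ^+ a * (r ^+ b / r ^+ c) * (r ^+ d / r ^+ f) <= r ^- e.
Proof.
move=> hr hle.
have r0 : r != 0 by apply/eqP => h; rewrite h in hr; lra.
have rp : 0 < r by lra.
have -> : r ^+ a * (r ^+ b / r ^+ c) * (r ^+ d / r ^+ f) = r ^+ (a + b + d) / r ^+ (c + f).
  rewrite !exprD; field; apply/andP; split; exact: expf_neq0.
rewrite ler_pdivrMr ?exprn_gt0 //.
have -> : r ^- e * r ^+ (c + f) = r ^+ (c + f - e).
  have -> : (c + f = (c + f - e) + e)%N by lia.
  rewrite exprD addnK mulrC -mulrA mulfV ?mulr1 //; exact: expf_neq0.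
apply: ler_weXn2l; first lra.
lia.
Qed.

Lemma general (q l m k d' D' e : nat) : (2 <= q)%N -> (2 <= l)%N -> (k <= m)%N ->
  d' = (k * l)%N -> D' = ((m - k) * l)%N ->
  (k * (m - k + 1) + l * (k * k) + l * ((m - k) * (m - k)) + e
     <= l * k * (l * k - 1) + l * (m - k) * (l * (m - k) - 1))%N ->
  qbinom q m k
    * ((GLorder k (q ^ l))%:R / (GLorder d' q)%:R)
    * ((GLorder (m - k) (q ^ l))%:R / (GLorder D' q)%:R)
  <= (q%:R : rat) ^- e.
Proof.
move=> hq hl hkm hd hD hE.
set j := (m - k)%N in hD hE *.
have [hQ0 hQ1] := andP (qbinom_bd q m k hq hkm).
have hpos : forall N, (0 : rat) < (q ^ (N * (N - 1)))%N%:R.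
  by move=> N; rewrite ltr0n expn_gt0; apply/orP; left; lia.
have hGL : forall k0, ((GLorder k0 (q ^ l))%:R : rat) <= (q ^ (l * (k0 * k0)))%N%:R.
  by move=> k0; rewrite ler_nat expnM; apply: GL_ub.
have hGL2 : forall N, ((q ^ (N * (N - 1)))%N%:R : rat) <= (GLorder N q)%:R.
  by move=> N; rewrite ler_nat; apply: GL_lb.
apply: (@le_trans _ _ ((q ^ (k * (m - k + 1)))%N%:R
   * ((q ^ (l * (k * k)))%N%:R / (q ^ (d' * (d' - 1)))%N%:R)
   * ((q ^ (l * (j * j)))%N%:R / (q ^ (D' * (D' - 1)))%N%:R))).
  apply: ler_pM.
  - apply: mulr_ge0 => //; apply: divr_ge0; exact: ler0n.
  - apply: divr_ge0; exact: ler0n.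
  - apply: ler_pM => //.
    + apply: divr_ge0; exact: ler0n.
    + by apply: frac_le => //; exact: ler0n.
  - by apply: frac_le => //; exact: ler0n.
rewrite !natrX; apply: final_ineq.
  by rewrite (ler_nat rat 2 q).
rewrite hd hD /j.
have e1 : (k * l = l * k)%N by rewrite mulnC.
have e2 : ((m - k) * l = l * (m - k))%N by rewrite mulnC.
rewrite e1 e2; move: hE; set A := (l * k * (l * k - 1))%N; set B := (l * (m - k) * (l * (m - k) - 1))%N.
lia.
Qed.
Lemma GL_rat k r : (1 <= r)%N ->
  ((GLorder k r)%:R : rat) = \prod_(i < k) ((r%:R : rat) ^+ k - r%:R ^+ i).
Proof.
move=> hr; rewrite /GLorder natr_prod; apply: eq_bigr => i _.
rewrite natrB ?natrX //; apply: leq_pexp2l => //; exact: ltnW.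
Qed.

Lemma special q : (2 <= q)%N ->
  qbinom q 3 1
    * ((GLorder 1 (q ^ 2))%:R / (GLorder 2 q)%:R)
    * ((GLorder 2 (q ^ 2))%:R / (GLorder 4 q)%:R)
  <= (q%:R : rat) ^- 4.
Proof.
move=> hq.
have hq1 : (1 <= q)%N by lia.
have hq2 : (1 <= q ^ 2)%N by rewrite expn_gt0; lia.
rewrite /= !GL_rat // /qbinom /=.
rewrite !big_ord_recr !big_ord0 /= !subn0 !expn1 natrX.
set x := (q%:R : rat).
have hx : 2 <= x by rewrite /x (ler_nat rat 2 q).
rewrite !natrX -/x.
have x1 : x - 1 != 0 by apply/eqP => h; lra.
have x0 : x != 0 by apply/eqP => h; lra.
have x2 : x + 1 != 0 by apply/eqP => h; lra.
have x3 : x ^+ 2 + x + 1 != 0.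
  apply/eqP => h; have : 0 < x ^+ 2 + x + 1 by rewrite expr2; nra. by rewrite h ltxx.
have x4 : x ^+ 2 + 1 != 0.
  apply/eqP => h; have : 0 < x ^+ 2 + 1 by rewrite expr2; nra. by rewrite h ltxx.
rewrite !expr1 !expr0 !mul1r -exprM /=.
have e1 : x ^+ 3 - 1 = (x - 1) * (x ^+ 2 + x + 1) by ring.
have e2 : x ^+ 2 - 1 = (x - 1) * (x + 1) by ring.
have e3 : x ^+ 2 - x = x * (x - 1) by ring.
have e4 : x ^+ 4 - 1 = (x - 1) * (x + 1) * (x ^+ 2 + 1) by ring.
have e5 : x ^+ 4 - x = x * (x - 1) * (x ^+ 2 + x + 1) by ring.
have e6 : x ^+ 4 - x ^+ 2 = x ^+ 2 * (x - 1) * (x + 1) by ring.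
have e7 : x ^+ 4 - x ^+ 3 = x ^+ 3 * (x - 1) by ring.
rewrite (_ : (2 * 2)%N = 4%N) // e1 e2 e3 e4 e5 e6 e7.
have -> : (x - 1) * (x ^+ 2 + x + 1) / (x - 1) *
  ((x - 1) * (x + 1) / ((x - 1) * (x + 1) * (x * (x - 1)))) *
  ((x - 1) * (x + 1) * (x ^+ 2 + 1) * (x ^+ 2 * (x - 1) * (x + 1)) /
   ((x - 1) * (x + 1) * (x ^+ 2 + 1) * (x * (x - 1) * (x ^+ 2 + x + 1)) *
    (x ^+ 2 * (x - 1) * (x + 1)) * (x ^+ 3 * (x - 1)))) = (x ^+ 5 * (x - 1) ^+ 3)^-1.
  field.
  by rewrite -/x x1 x0 x2 x3 x4.
have hp : 0 < x ^+ 4 by rewrite exprn_gt0 //; lra.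
rewrite lef_pV2 ?posrE //; last by rewrite mulr_gt0 // exprn_gt0 //; lra.
have h1 : 1 <= (x - 1) ^+ 3 by rewrite exprn_ege1 //; lra.
apply: (@le_trans _ _ (x ^+ 5)); first by apply: ler_weXn2l => //; lra.
by rewrite ler_peMr // exprn_ge0 //; lra.
Qed.

Lemma pdiv2 n : (1 < n)%N -> (2 %| n)%N -> pdiv n = 2%N.
Proof.
move=> hn h2; have h := pdiv_min_dvd (isT : (1 < 2)%N) h2.
have := prime_gt1 (pdiv_prime hn); lia.
Qed.

Theorem lemma5p3 (q p e n d l : nat) :
  prime p -> (0 < e)%N -> q = (p ^ e)%N ->
  (5 <= n)%N ->
  (2 <= d)%N -> (d < n - n %/ pdiv n)%N ->
  prime l -> (l %| n)%N -> (l %| d)%N ->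
  qbinom q (n %/ l) (d %/ l)
    * ((GLorder (d %/ l) (q ^ l))%:R / (GLorder d q)%:R)
    * ((GLorder (n %/ l - d %/ l) (q ^ l))%:R / (GLorder (n - d) q)%:R)
  <= (q%:R : rat) ^- ((l - 1) ^ 2 + 3)%N.
Proof.
move=> pp e0 hq n5 d2 hdn pl hln hld.
have hq2 : (2 <= q)%N.
  rewrite hq; apply: (leq_trans (prime_gt1 pp)); rewrite -{1}(expn1 p).
  apply: leq_pexp2l => //; exact: prime_gt0.
have l2 := prime_gt1 pl.
have hd := divnK hld; have hn := divnK hln.
set k := (d %/ l)%N in hd *; set m := (n %/ l)%N in hn *.
have hdn' : (d < n)%N by apply: leq_trans hdn (leq_subr _ _).
have k1 : (1 <= k)%N by nia.
have km : (k < m)%N by nia.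
have P2 : (2 %| n)%N -> (n %/ pdiv n = n %/ 2)%N by move=> h; rewrite pdiv2 //; lia.
have Cl2 : l = 2%N -> (k < m - k)%N.
  move=> El; subst l.
  have h2 : (2 %| n)%N by rewrite -hn dvdn_mull.
  move: hdn; rewrite P2 // -hn mulnK //; nia.
have Ckj : ~ (k = 1%N /\ (m - k)%N = 1%N).
  case=> Ek Ej.
  have Em : m = 2%N by lia.
  have h2 : (2 %| n)%N by rewrite -hn Em dvdn_mulr.
  move: hdn; rewrite P2 // -hn Em mulKn //; lia.
clearbody k m; subst d n.
case: (boolP ((l == 2%N) && (k == 1%N) && ((m - k)%N == 2%N))) =>
   [/andP [/andP [/eqP El /eqP Ek] /eqP Ej] | Hgen].
  have Em : m = 3%N by lia.
  subst l k m. exact: special hq2.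
apply: general => //; first exact: ltnW.
  by rewrite mulnBl.
apply: expo => //; first lia.
move=> [El [Ek Ej]]; move: Hgen; by rewrite Ej El Ek.
Qed.
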